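(* Let $i\in\mathbb Z_{\ge0}$, $J\in\mathbb Z_{>0}$, $j\in\mathbb Z$. If $j<0$ or $j>J$ then $W_J(i,j;i+j,0\mid v,\lambda)=0$. If $0\le j\le J$ then $$W_J(i,j;i+j,0\mid v,\lambda)=f(2\eta)^j\frac{[2\eta J]_J}{[2\eta(J-j)]_{J-j}[2\eta j]_j}\frac{[\lambda+2\eta(i+j)]_{J-j}}{[\eta\Lambda-v]_J}\cdot\frac{[v+\lambda+2\eta(i+2j-1)-\eta\Lambda]_j\,[\eta\Lambda-2\eta(i+j)-v]_{J-j}}{[\lambda+2\eta j]_{J-j}\,[\lambda+2\eta(2j-J-1)]_j}.$$
   Context: Fix $\eta,\tau\in\mathbb C$, $\operatorname{Im}\tau>0$. $f(z)$ denotes either $\theta(z)=-\sum_{j\in\mathbb Z}\exp\big(\pi\mathbf i\tau(j+\tfrac12)^2+2\pi\mathbf i(j+\tfrac12)(z+\tfrac12)\big)$ or $\sin(\pi z)$. Elliptic Pochhammer: $[a]_k=\prod_{m=0}^{k-1}f(a-2\eta m)$ for $k\ge0$, $[a]_k=\prod_{m=1}^{-k}f(a+2\eta m)^{-1}$ for $k<0$. Unfused weights ($k\ge0$): $W_1(k,0;k,0\mid v,\lambda,\Lambda)=\frac{f(\eta(\Lambda-2k)-v)f(\lambda+2k\eta)}{f(\eta\Lambda-v)f(\lambda)}$, $W_1(k,1;k+1,0\mid\cdot)=\frac{f(v+\lambda+\eta(2k+2-\Lambda))f(2\eta)}{f(\eta\Lambda-v)f(\lambda)}$, $W_1(k,0;k-1,1\mid\cdot)=\frac{f(\lambda-v+\eta(2k-2-\Lambda))f(2\eta(\Lambda+1-k))f(2k\eta)}{f(\eta\Lambda-v)f(\lambda)f(2\eta)}$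 ($k\ge1$), $W_1(k,1;k,1\mid\cdot)=\frac{f(\eta(2k-\Lambda)-v)f(\lambda+2\eta(k-\Lambda))}{f(\eta\Lambda-v)f(\lambda)}$, and $0$ otherwise. Column weights: for $\mathcal J_1=(j_{1,k})_{k=1}^J,\mathcal J_2=(j_{2,k})_{k=1}^J\in\{0,1\}^J$, $i^{(1)}=i_1$, $i^{(k+1)}=i^{(k)}+j_{1,k}-j_{2,k}$, $\Phi_J=\lambda$, $\Phi_k=\Phi_{k+1}\mp2\eta$ according as $j_{1,k+1}=0$ or $1$; $W_J(i_1,\mathcal J_1;i_2,\mathcal J_2\mid v,\lambda)=\prod_{k=1}^JW_1(i^{(k)},j_{1,k};i^{(k+1)},j_{2,k}\mid v+2\eta(k-1),\Phi_k,\Lambda)$ if all $i^{(k)}\ge0$ and $i^{(J+1)}=i_2$, else $0$. Fused weight: $W_J(i_1,j_1;i_2,j_2\mid v,\lambda)=\sum_{|\mathcal J_1|=j_1}W_J(i_1,\mathcal J_1;i_2,\mathcal K\mid v,\lambda)$ for any $\mathcal K$ with $|\mathcal K|=j_2$ (independent of $\mathcal K$); $\Lambda$ is suppressed. *)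

(* Defs.v *)
From Stdlib Require Import Reals ZArith List Lia Bool.
Import ListNotations.
Open Scope R_scope.

Record Cplx := mkC { Re : R; Im : R }.

Definition C0 : Cplx := mkC 0 0.
Definition C1 : Cplx := mkC 1 0.
Definition Ci : Cplx := mkC 0 1.
Definition RtoC (x : R) : Cplx := mkC x 0.
Definition ZtoC (n : Z) : Cplx := mkC (IZR n) 0.
Definition Cadd (z w : Cplx) : Cplx := mkC (Re z + Re w) (Im z + Im w).
Definition Copp (z : Cplx) : Cplx := mkC (- Re z) (- Im z).
Definition Csub (z w : Cplx) : Cplx := Cadd z (Copp w).
Definition Cmul (z w : Cplx) : Cplx :=
  mkC (Re z * Re w - Im z * Im w) (Re z * Im w + Im z * Re w).
(* inverse; Cinv C0 = C0 (total convention, never used on 0 in the theorem) *)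
Definition Cinv (z : Cplx) : Cplx :=
  let d := Re z * Re z + Im z * Im z in mkC (Re z / d) (- Im z / d).
Definition Cdiv (z w : Cplx) : Cplx := Cmul z (Cinv w).
Fixpoint Cpow (z : Cplx) (n : nat) : Cplx :=
  match n with O => C1 | S n => Cmul z (Cpow z n) end.

Declare Scope C_scope.
Delimit Scope C_scope with Cplx.
Infix "+" := Cadd : C_scope.
Infix "-" := Csub : C_scope.
Infix "*" := Cmul : C_scope.
Infix "/" := Cdiv : C_scope.
Notation "- z" := (Copp z) : C_scope.

Definition Cexp (z : Cplx) : Cplx := mkC (exp (Re z) * cos (Im z)) (exp (Re z) * sin (Im z)).
Definition CPI : Cplx := RtoC PI.
Definition Csin (w : Cplx) : Cplx :=
  Cdiv (Csub (Cexp (Cmul Ci w)) (Cexp (Copp (Cmul Ci w)))) (Cmul (RtoC 2) Ci).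

Definition C_cv (u : nat -> Cplx) (l : Cplx) : Prop :=
  Un_cv (fun n => Re (u n)) (Re l) /\ Un_cv (fun n => Im (u n)) (Im l).

Definition Csum (l : list Cplx) : Cplx := fold_right Cadd C0 l.
Definition Cprod (l : list Cplx) : Cplx := fold_right Cmul C1 l.

Definition theta_term (tau z : Cplx) (j : Z) : Cplx :=
  let h := Cadd (ZtoC j) (RtoC (1/2)) in
  Cexp (Cadd (Cmul (Cmul (Cmul CPI Ci) tau) (Cmul h h))
             (Cmul (Cmul (Cmul (RtoC 2) (Cmul CPI Ci)) h) (Cadd z (RtoC (1/2))))).

Definition theta_partial (tau z : Cplx) (N : nat) : Cplx :=
  Copp (Csum (map (fun k : nat => theta_term tau z (Z.of_nat k - Z.of_nat N)%Z)
                  (seq 0 (2 * N + 1)))).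

(** f is either theta (the limit of the series, which converges for Im tau > 0)
    or z |-> sin(pi z) *)
Definition is_f (tau : Cplx) (f : Cplx -> Cplx) : Prop :=
  (forall z, C_cv (theta_partial tau z) (f z)) \/
  (forall z, f z = Csin (Cmul CPI z)).

Definition epoch (f : Cplx -> Cplx) (eta a : Cplx) (k : Z) : Cplx :=
  if (0 <=? k)%Z then
    Cprod (map (fun m : nat => f (Csub a (Cmul (ZtoC (2 * Z.of_nat m)) eta)))
               (seq 0 (Z.to_nat k)))
  else
    Cprod (map (fun m : nat => Cinv (f (Cadd a (Cmul (ZtoC (2 * Z.of_nat m)) eta))))
               (seq 1 (Z.to_nat (- k)))).

Definition W1 (f : Cplx -> Cplx) (eta Lam : Cplx) (a b c d : Z) (v lam : Cplx) : Cplx :=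
  let e (n : Z) := Cmul (ZtoC n) eta in
  let den := Cmul (f (Csub (Cmul eta Lam) v)) (f lam) in
  if (a <? 0)%Z then C0 else
  if (b =? 0)%Z && (d =? 0)%Z && (c =? a)%Z then
    Cdiv (Cmul (f (Csub (Cmul eta (Csub Lam (ZtoC (2 * a)))) v)) (f (Cadd lam (e (2 * a)%Z))))
         den
  else if (b =? 1)%Z && (d =? 0)%Z && (c =? a + 1)%Z then
    Cdiv (Cmul (f (Cadd (Cadd v lam) (Cmul eta (Csub (ZtoC (2 * a + 2)) Lam)))) (f (e 2%Z)))
         den
  else if (b =? 0)%Z && (d =? 1)%Z && (c =? a - 1)%Z && (1 <=? a)%Z then
    Cdiv (Cmul (Cmul (f (Csub lam (Cadd v (Cmul eta (Cadd (ZtoC (- 2 * a + 2)) Lam)))))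
                     (f (Cmul (Cmul (RtoC 2) eta) (Csub (Cadd Lam C1) (ZtoC a)))))
               (f (e (2 * a)%Z)))
         (Cmul den (f (e 2%Z)))
  else if (b =? 1)%Z && (d =? 1)%Z && (c =? a)%Z then
    Cdiv (Cmul (f (Csub (Cmul eta (Csub (ZtoC (2 * a)) Lam)) v))
               (f (Cadd lam (Cmul (Cmul (RtoC 2) eta) (Csub (ZtoC a) Lam)))))
         den
  else C0.

(** * Column weights.  Bit vectors are lists of booleans (true = 1),
    position k (1-based) is [nth (k-1) l false]. *)
Definition bitZ (l : list bool) (k : nat) : Z := if nth (k - 1) l false then 1%Z else 0%Z.

Definition iseq (i1 : Z) (l1 l2 : list bool) (k : nat) : Z :=
  (i1 + fold_right Z.add 0 (map (fun m => bitZ l1 m - bitZ l2 m) (seq 1 (k - 1))))%Z.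

(* Phi_J = lam, Phi_k = Phi_{k+1} - 2 eta if j_{1,k+1} = 0, + 2 eta if = 1 *)
Fixpoint Phi_off (l1 : list bool) (J k : nat) (fuel : nat) : Z :=
  match fuel with
  | O => 0%Z
  | S fuel' => if (J <=? k)%nat then 0%Z
               else (Phi_off l1 J (S k) fuel' + (2 * bitZ l1 (S k) - 1))%Z
  end.
Definition Phi (eta lam : Cplx) (l1 : list bool) (J k : nat) : Cplx :=
  Cadd lam (Cmul (ZtoC (2 * Phi_off l1 J k J)) eta).

Definition WJcol (f : Cplx -> Cplx) (eta Lam : Cplx) (J : nat) (i1 : Z) (l1 : list bool)
    (i2 : Z) (l2 : list bool) (v lam : Cplx) : Cplx :=
  if forallb (fun k => (0 <=? iseq i1 l1 l2 k)%Z) (seq 1 (J + 1))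
     && (iseq i1 l1 l2 (J + 1) =? i2)%Z then
    Cprod (map (fun k =>
      W1 f eta Lam (iseq i1 l1 l2 k) (bitZ l1 k) (iseq i1 l1 l2 (S k)) (bitZ l2 k)
         (Cadd v (Cmul (ZtoC (2 * (Z.of_nat k - 1))) eta)) (Phi eta lam l1 J k))
      (seq 1 J))
  else C0.

Fixpoint bitvecs (n : nat) : list (list bool) :=
  match n with
  | O => [[]]
  | S n => map (cons false) (bitvecs n) ++ map (cons true) (bitvecs n)
  end.

Definition weight (l : list bool) : Z := Z.of_nat (length (filter (fun b => b) l)).

(** Fused weight: sum over J1 with |J1| = j1, with the fixed choice
    K = (1,...,1,0,...,0) with |K| = j2 (the paper states the result is
    independent of K; in the theorem j2 = 0 so K = (0,...,0) is forced). *)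
Definition WJ (f : Cplx -> Cplx) (eta Lam : Cplx) (J : nat) (i1 j1 i2 j2 : Z) (v lam : Cplx) : Cplx :=
  let K := repeat true (Z.to_nat j2) ++ repeat false (J - Z.to_nat j2) in
  Csum (map (fun l1 => WJcol f eta Lam J i1 l1 i2 K v lam)
            (filter (fun l1 => (weight l1 =? j1)%Z) (bitvecs J))).

(* Main.v *)
Require Import Defs.
From Stdlib Require Import Reals ZArith List Lia Lra Field Ring Bool Permutation FinFun FunctionalExtensionality.
Import ListNotations.
Open Scope R_scope.

Lemma Ceq : forall z w : Cplx, Re z = Re w -> Im z = Im w -> z = w.
Proof. intros [a b] [c d]; simpl; intros -> ->; reflexivity. Qed.

Lemma C_ring : ring_theory C0 Defs.C1 Cadd Cmul Csub Copp (@eq Cplx).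
Proof.
  constructor; intros; apply Ceq; simpl; ring.
Qed.

Lemma C1_neq_C0 : Defs.C1 <> C0.
Proof. intro H; injection H; lra. Qed.

Lemma Cnz_d : forall z : Cplx, z <> C0 -> Re z * Re z + Im z * Im z <> 0.
Proof.
  intros [a b] Hz; simpl; intro H.
  apply Hz. assert (a = 0) by nra. assert (b = 0) by nra. subst; reflexivity.
Qed.

Lemma C_field : field_theory C0 Defs.C1 Cadd Cmul Csub Copp Cdiv Cinv (@eq Cplx).
Proof.
  constructor.
  - exact C_ring.
  - exact C1_neq_C0.
  - reflexivity.
  - intros p Hp. pose proof (Cnz_d p Hp) as Hd. destruct p as [a b]; simpl in *.
    apply Ceq; simpl; field; exact Hd.
Qed.

Add Field Cfield : C_field.

Ltac ceq := apply Ceq; simpl; unfold Rminus, Rdiv; ring_simplify; try lra.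

Lemma test : forall x y : Cplx, Cmul x (Cadd y Defs.C1) = Cadd (Cmul x y) x.
Proof. intros; ring. Qed.

Lemma ZtoC_add : forall a b, ZtoC (a + b) = Cadd (ZtoC a) (ZtoC b).
Proof. intros; apply Ceq; cbn [Re Im ZtoC Cadd]; rewrite ?plus_IZR; ring. Qed.
Lemma ZtoC_mul : forall a b, ZtoC (a * b) = Cmul (ZtoC a) (ZtoC b).
Proof. intros; apply Ceq; cbn [Re Im ZtoC Cmul]; rewrite ?mult_IZR; ring. Qed.
Lemma ZtoC_sub : forall a b, ZtoC (a - b) = Csub (ZtoC a) (ZtoC b).
Proof. intros; apply Ceq; cbn [Re Im ZtoC Cadd Csub Copp]; rewrite ?minus_IZR; ring. Qed.
Lemma ZtoC_opp : forall a, ZtoC (- a) = Copp (ZtoC a).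
Proof. intros; apply Ceq; cbn [Re Im ZtoC Copp]; rewrite ?opp_IZR; ring. Qed.
Lemma ZtoC_0 : ZtoC 0 = C0.
Proof. reflexivity. Qed.

Lemma Cexp_add : forall z w, Cexp (Cadd z w) = Cmul (Cexp z) (Cexp w).
Proof. intros [a b] [c d]; apply Ceq; simpl; rewrite exp_plus, ?cos_plus, ?sin_plus; ring. Qed.

Lemma Cexp_opp : forall z, Cmul (Cexp z) (Cexp (Copp z)) = Defs.C1.
Proof. intros z. rewrite <- Cexp_add. destruct z as [a b]; apply Ceq; simpl;
  replace (a + - a) with 0 by ring; replace (b + - b) with 0 by ring;
  rewrite exp_0, ?cos_0, ?sin_0; ring. Qed.

Definition FF (f : Cplx -> Cplx) (x y : Cplx) := Cmul (f (Cadd x y)) (f (Csub x y)).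

Definition TT (f : Cplx -> Cplx) := forall X1 X2 X3 X4,
  Cadd (Cmul (FF f X1 X3) (FF f X4 X2)) (Cmul (FF f X1 X4) (FF f X2 X3))
  = Cmul (FF f X4 X3) (FF f X1 X2).

Lemma TT_of_B : forall f (B0 B1 : Cplx -> Cplx),
  (forall x y, FF f x y = Csub (Cmul (B0 x) (B1 y)) (Cmul (B1 x) (B0 y))) -> TT f.
Proof. intros f B0 B1 H X1 X2 X3 X4; rewrite !H; ring. Qed.

Lemma two_i_nz : Cmul (RtoC 2) Ci <> C0.
Proof. intro H; injection H; intros; lra. Qed.

Lemma TT_sin : forall f, (forall z, f z = Csin (Cmul CPI z)) -> TT f.
Proof.
  intros f Hf.
  apply (TT_of_B f (fun x => Cadd (Cmul (Cexp (Cmul Ci (Cmul CPI x))) (Cexp (Cmul Ci (Cmul CPI x))))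
                                 (Cmul (Cexp (Copp (Cmul Ci (Cmul CPI x)))) (Cexp (Copp (Cmul Ci (Cmul CPI x))))))
                   (fun _ => Cdiv (Defs.C1) (Cmul (Cmul (RtoC 2) Ci) (Cmul (RtoC 2) Ci)))).
  intros x y. unfold FF. rewrite !Hf. unfold Csin.
  replace (Cmul Ci (Cmul CPI (Cadd x y))) with (Cadd (Cmul Ci (Cmul CPI x)) (Cmul Ci (Cmul CPI y))) by ring.
  replace (Cmul Ci (Cmul CPI (Csub x y))) with (Cadd (Cmul Ci (Cmul CPI x)) (Copp (Cmul Ci (Cmul CPI y)))) by ring.
  set (A := Cmul Ci (Cmul CPI x)). set (B := Cmul Ci (Cmul CPI y)).
  replace (Copp (Cadd A B)) with (Cadd (Copp A) (Copp B)) by ring.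
  replace (Copp (Cadd A (Copp B))) with (Cadd (Copp A) B) by ring.
  rewrite !Cexp_add.
  pose proof (Cexp_opp A) as HA. pose proof (Cexp_opp B) as HB.
  set (a := Cexp A) in *. set (a' := Cexp (Copp A)) in *.
  set (b := Cexp B) in *. set (b' := Cexp (Copp B)) in *.
  assert (Ha' : a' = Cdiv Defs.C1 a).
  { assert (a <> C0) by (intro E; rewrite E in HA; apply C1_neq_C0; rewrite <- HA; ring).
    field_simplify_eq; auto. rewrite <- HA; ring. }
  assert (Hb' : b' = Cdiv Defs.C1 b).
  { assert (b <> C0) by (intro E; rewrite E in HB; apply C1_neq_C0; rewrite <- HB; ring).
    field_simplify_eq; auto. rewrite <- HB; ring. }
  assert (a <> C0) by (intro E; rewrite E in HA; apply C1_neq_C0; rewrite <- HA; ring).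
  assert (b <> C0) by (intro E; rewrite E in HB; apply C1_neq_C0; rewrite <- HB; ring).
  rewrite Ha', Hb'. field. repeat split; auto using two_i_nz.
  all: intro E; injection E; intros; lra.
Qed.

Definition bz (b : bool) : Z := if b then 1%Z else 0%Z.

Lemma bitZ_cons_S : forall b l k, (1 <= k)%nat -> bitZ (b :: l) (S k) = bitZ l k.
Proof. intros b l k Hk. unfold bitZ. destruct k; [lia|]. simpl. rewrite Nat.sub_0_r. reflexivity. Qed.

Lemma bitZ_cons_1 : forall b l, bitZ (b :: l) 1 = bz b.
Proof. intros; reflexivity. Qed.

Lemma seq_S1 : forall n, seq 1 (S n) = 1%nat :: map S (seq 1 n).
Proof. intros; simpl; rewrite seq_shift; reflexivity. Qed.

Lemma iseq_cons : forall i b c l1 l2 k, (1 <= k)%nat ->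
  iseq i (b :: l1) (c :: l2) (S k) = iseq (i + bz b - bz c)%Z l1 l2 k.
Proof.
  intros i b c l1 l2 k Hk. unfold iseq.
  destruct k as [|k]; [lia|]. simpl (S (S k) - 1)%nat. simpl (S k - 1)%nat.
  rewrite Nat.sub_0_r. rewrite seq_S1, map_cons, map_map. simpl fold_right.
  rewrite !bitZ_cons_1.
  rewrite (map_ext_in _ (fun m => (bitZ l1 m - bitZ l2 m)%Z)).
  - lia.
  - intros m Hm. apply in_seq in Hm. rewrite !bitZ_cons_S by lia. reflexivity.
Qed.

Lemma iseq_1 : forall i l1 l2, iseq i l1 l2 1 = i.
Proof. intros; unfold iseq; simpl; lia. Qed.

Definition offc (l : list bool) (J k : nat) : Z :=
  fold_right Z.add 0%Z (map (fun m => (2 * bitZ l m - 1)%Z) (seq (S k) (J - k))).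

Lemma Phi_off_closed : forall l J fuel k, (J - k <= fuel)%nat -> Phi_off l J k fuel = offc l J k.
Proof.
  intros l J fuel. induction fuel as [|fuel IH]; intros k Hk.
  - unfold offc. simpl. replace (J - k)%nat with 0%nat by lia. reflexivity.
  - simpl. destruct (J <=? k)%nat eqn:E.
    + apply Nat.leb_le in E. unfold offc. replace (J - k)%nat with 0%nat by lia. reflexivity.
    + apply Nat.leb_gt in E. rewrite IH by lia. unfold offc.
      replace (J - k)%nat with (S (J - S k)) by lia. simpl. lia.
Qed.

Lemma offc_cons : forall b l J k, offc (b :: l) (S J) (S k) = offc l J k.
Proof.
  intros. unfold offc. simpl (S J - S k)%nat. rewrite <- seq_shift, map_map.
  apply f_equal. apply map_ext_in. intros m Hm. apply in_seq in Hm.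
  rewrite bitZ_cons_S by lia. reflexivity.
Qed.

Lemma offc_0 : forall l, offc l (length l) 0 = (2 * weight l - Z.of_nat (length l))%Z.
Proof.
  induction l as [|b l IH].
  - reflexivity.
  - unfold offc in *. simpl (length (b :: l) - 0)%nat in *. rewrite Nat.sub_0_r in IH.
    rewrite seq_S1. rewrite map_cons, map_map. simpl fold_right.
    rewrite (map_ext_in _ (fun m => (2 * bitZ l m - 1)%Z)).
    2:{ intros m Hm. apply in_seq in Hm. rewrite bitZ_cons_S by lia. reflexivity. }
    rewrite IH. unfold weight. rewrite bitZ_cons_1. destruct b; cbn [filter length bz]; rewrite ?Nat2Z.inj_succ; lia.
Qed.

Lemma forallb_ext_in : forall A (p q : A -> bool) l, (forall x, In x l -> p x = q x) -> forallb p l = forallb q l.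
Proof. intros A p q l H; induction l; simpl; auto. rewrite H by (left; auto). rewrite IHl; auto. intros; apply H; right; auto. Qed.

Lemma WJcol_cons : forall f eta Lam J i b c l l2 i2 v lam,
  (0 <= i)%Z ->
  WJcol f eta Lam (S J) i (b :: l) i2 (c :: l2) v lam =
  Cmul (W1 f eta Lam i (bz b) (i + bz b - bz c)%Z (bz c) v
           (Cadd lam (Cmul (ZtoC (2 * offc l J 0)) eta)))
       (WJcol f eta Lam J (i + bz b - bz c)%Z l i2 l2 (Cadd v (Cmul (ZtoC 2) eta)) lam).
Proof.
  intros f eta Lam J i b c l l2 i2 v lam Hi. unfold WJcol.
  replace (seq 1 (S J + 1)) with (1%nat :: map S (seq 1 (J + 1))) by (rewrite <- seq_S1; f_equal).
  simpl forallb at 1. rewrite iseq_1. replace (0 <=? i)%Z with true by (symmetry; apply Z.leb_le; auto).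
  simpl andb.
  assert (Hfm : forall A B (g : A -> B) p (l0 : list A), forallb p (map g l0) = forallb (fun x => p (g x)) l0) by (induction l0; simpl; congruence).
  rewrite Hfm.
  rewrite (forallb_ext_in _ _ (fun k => (0 <=? iseq (i + bz b - bz c) l l2 k)%Z)).
  2:{ intros k Hk; apply in_seq in Hk; rewrite iseq_cons by lia; reflexivity. }
  replace (S J + 1)%nat with (S (J + 1)) by lia. rewrite iseq_cons by lia.
  destruct (forallb _ _ && _)%bool.
  2: ring.
  rewrite seq_S1, map_cons, map_map. simpl (Cprod (_ :: _)).
  rewrite iseq_1. rewrite iseq_cons by lia. rewrite iseq_1, !bitZ_cons_1.
  f_equal.
  - f_equal.
    + replace (2 * (Z.of_nat 1 - 1))%Z with 0%Z by lia. rewrite ZtoC_0. ring.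
    + unfold Phi. rewrite Phi_off_closed by lia. rewrite offc_cons. reflexivity.
  - f_equal. apply map_ext_in. intros k Hk. apply in_seq in Hk.
    rewrite !iseq_cons by lia. rewrite !bitZ_cons_S by lia. f_equal.
    + transitivity (Cadd v (Cmul (ZtoC (2 * (Z.of_nat (S k) - 1))) eta)); [reflexivity|].
      replace (2 * (Z.of_nat (S k) - 1))%Z with (2 + 2 * (Z.of_nat k - 1))%Z by lia. rewrite ZtoC_add. ring.
    + unfold Phi. rewrite !Phi_off_closed by lia. rewrite offc_cons. reflexivity.
Qed.

Definition SJ f eta Lam (J : nat) (i j : Z) (v lam : Cplx) : Cplx :=
  Csum (map (fun l1 => WJcol f eta Lam J i l1 (i + j)%Z (repeat false J) v lam)
            (filter (fun l1 => (weight l1 =? j)%Z) (bitvecs J))).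

Lemma WJ_SJ : forall f eta Lam J i j v lam,
  WJ f eta Lam J i j (i + j)%Z 0%Z v lam = SJ f eta Lam J i j v lam.
Proof. intros. unfold WJ, SJ. simpl (Z.to_nat 0). rewrite Nat.sub_0_r. reflexivity. Qed.

Lemma bitvecs_len : forall J l, In l (bitvecs J) -> length l = J.
Proof.
  induction J; simpl; intros l H.
  - destruct H as [<-|[]]; reflexivity.
  - apply in_app_or in H. destruct H as [H|H]; apply in_map_iff in H;
    destruct H as [l' [<- H]]; simpl; f_equal; auto.
Qed.

Lemma weight_bounds : forall l, (0 <= weight l <= Z.of_nat (length l))%Z.
Proof.
  intros l. unfold weight. split; [lia|]. apply inj_le.
  induction l as [|b l IH]; simpl; [lia|]. destruct b; simpl; lia.
Qed.

Lemma SJ_out : forall f eta Lam J i j v lam, ((j < 0)%Z \/ (j > Z.of_nat J)%Z) ->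
  SJ f eta Lam J i j v lam = C0.
Proof.
  intros. unfold SJ.
  replace (filter _ _) with (@nil (list bool)). reflexivity.
  assert (Hf : forall (L : list (list bool)), (forall x, In x L -> length x = J) ->
     [] = filter (fun l1 => (weight l1 =? j)%Z) L).
  { induction L as [|l L IH]; simpl; intros HL; auto.
    pose proof (HL l (or_introl eq_refl)). pose proof (weight_bounds l).
    replace (weight l =? j)%Z with false by (symmetry; apply Z.eqb_neq; lia).
    apply IH; auto. }
  apply Hf, bitvecs_len.
Qed.

Lemma Csum_app : forall l1 l2, Csum (l1 ++ l2) = Cadd (Csum l1) (Csum l2).
Proof. induction l1; intros; simpl; [ring|]. rewrite IHl1; ring. Qed.

Lemma Csum_scal : forall A (c : Cplx) (g : A -> Cplx) l,
  Csum (map (fun x => Cmul c (g x)) l) = Cmul c (Csum (map g l)).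
Proof. induction l; simpl; [ring|]. rewrite IHl; ring. Qed.

Lemma filter_ext : forall A (p q : A -> bool) l, (forall x, p x = q x) -> filter p l = filter q l.
Proof. induction l; simpl; intros H; auto. rewrite H, IHl; auto. Qed.

Lemma filter_map_cons : forall A B (g : A -> B) p l, filter p (map g l) = map g (filter (fun x => p (g x)) l).
Proof. induction l; simpl; auto. destruct (p (g a)); simpl; congruence. Qed.

Lemma SJ_rec : forall f eta Lam J i j v lam, (0 <= i)%Z ->
  SJ f eta Lam (S J) i j v lam =
  Cadd (Cmul (W1 f eta Lam i 0 i 0 v (Cadd lam (Cmul (ZtoC (2 * (2 * j - Z.of_nat J))) eta)))
             (SJ f eta Lam J i j (Cadd v (Cmul (ZtoC 2) eta)) lam))
       (Cmul (W1 f eta Lam i 1 (i + 1) 0 v (Cadd lam (Cmul (ZtoC (2 * (2 * (j - 1) - Z.of_nat J))) eta)))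
             (SJ f eta Lam J (i + 1) (j - 1) (Cadd v (Cmul (ZtoC 2) eta)) lam)).
Proof.
  intros f eta Lam J i j v lam Hi. unfold SJ. simpl bitvecs. simpl repeat.
  rewrite filter_app, !filter_map_cons, map_app, !map_map, Csum_app.
  f_equal.
  - rewrite <- Csum_scal. f_equal. apply map_ext_in. intros l Hl.
    apply filter_In in Hl. destruct Hl as [Hl Hw]. apply Z.eqb_eq in Hw.
    pose proof (bitvecs_len _ _ Hl) as HL.
    rewrite WJcol_cons by auto. simpl bz.
    rewrite <- HL at 1. rewrite offc_0, HL.
    replace (i + 0 - 0)%Z with i by lia. rewrite Hw. reflexivity.
  - rewrite <- Csum_scal. rewrite (filter_ext _ (fun x => weight (true :: x) =? j)%Z (fun x => weight x =? j - 1)%Z).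
    2:{ intros l. unfold weight. cbn [filter length]. rewrite Nat2Z.inj_succ.
        destruct (Z.eqb_spec (Z.succ (Z.of_nat (length (filter (fun b => b) l)))) j);
        destruct (Z.eqb_spec (Z.of_nat (length (filter (fun b => b) l))) (j - 1)); lia. }
    f_equal. apply map_ext_in. intros l Hl.
    apply filter_In in Hl. destruct Hl as [Hl Hw]. apply Z.eqb_eq in Hw.
    pose proof (bitvecs_len _ _ Hl) as HL.
    rewrite WJcol_cons by auto. simpl bz.
    rewrite <- HL at 1. rewrite offc_0, HL.
    replace (i + 1 - 0)%Z with (i + 1)%Z by lia. rewrite Hw.
    replace (i + 1 + (j - 1))%Z with (i + j)%Z by lia. reflexivity.
Qed.

Definition EP (g : Z -> Cplx) (k n : Z) : Cplx :=
  Cprod (map (fun m : nat => g (k - 2 * Z.of_nat m)%Z) (seq 0 (Z.to_nat n))).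

Lemma EP_zero : forall g k n, n = 0%Z -> EP g k n = Defs.C1.
Proof. intros g k n ->. reflexivity. Qed.

Lemma EP_F : forall g k n m, (0 <= n)%Z -> m = (n + 1)%Z ->
  EP g k m = Cmul (g k) (EP g (k - 2) n).
Proof.
  intros g k n m Hn ->. unfold EP. rewrite Z2Nat.inj_add by lia. simpl (Z.to_nat 1).
  rewrite Nat.add_1_r. cbn [seq map Cprod]. rewrite <- seq_shift, map_map.
  cbn [Cprod fold_right]. unfold Cprod. f_equal; [f_equal; lia|]. f_equal. apply map_ext. intros m. f_equal. lia.
Qed.

Lemma Cprod_app : forall l1 l2, Cprod (l1 ++ l2) = Cmul (Cprod l1) (Cprod l2).
Proof. induction l1; intros; simpl; [ring|]. rewrite IHl1; ring. Qed.

Lemma EP_B : forall g k n m, (0 <= n)%Z -> m = (n + 1)%Z ->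
  EP g k m = Cmul (EP g k n) (g (k - 2 * n)%Z).
Proof.
  intros g k n m Hn ->. unfold EP. rewrite Z2Nat.inj_add by lia. simpl (Z.to_nat 1).
  rewrite seq_app, map_app, Cprod_app. simpl. rewrite Z2Nat.id by lia. ring.
Qed.

Lemma EP_shift : forall g c k m, EP (fun n => g (n + c)%Z) k m = EP g (k + c) m.
Proof. intros. unfold EP. f_equal. apply map_ext. intros. f_equal. lia. Qed.

Lemma EP_nz : forall g k n, (forall m, (0 <= m < n)%Z -> g (k - 2 * m)%Z <> C0) -> EP g k n <> C0.
Proof.
  intros g k n H. unfold EP.
  assert (Hg : forall m, In m (seq 0 (Z.to_nat n)) -> g (k - 2 * Z.of_nat m)%Z <> C0).
  { intros m Hm. apply in_seq in Hm. apply H. lia. }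
  induction (seq 0 (Z.to_nat n)) as [|a l IH]; simpl.
  - exact C1_neq_C0.
  - intro E. pose proof (Hg a (or_introl eq_refl)) as Ha.
    assert (Cprod (map (fun m : nat => g (k - 2 * Z.of_nat m)%Z) l) <> C0) as Hl
      by (apply IH; intros; apply Hg; right; auto).
    set (u := g _) in *. set (w := Cprod _) in *.
    apply Ha. replace u with (Cdiv (Cmul u w) w) by (field; auto). rewrite E. field; auto.
Qed.

Lemma EP_S : forall g k k' n, (0 <= n)%Z -> k' = (k - 2)%Z -> g k <> C0 ->
  EP g k' n = Cdiv (Cmul (EP g k n) (g (k - 2 * n)%Z)) (g k).
Proof.
  intros g k k' n Hn -> Hk. pose proof (EP_F g k n (n + 1) Hn eq_refl) as E1.
  pose proof (EP_B g k n (n + 1) Hn eq_refl) as E2. rewrite E1 in E2.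
  transitivity (Cdiv (Cmul (g k) (EP g (k - 2) n)) (g k)); [field; auto | rewrite E2; reflexivity].
Qed.

Lemma Cpow_S : forall z j, (1 <= j)%Z -> Cpow z (Z.to_nat j) = Cmul z (Cpow z (Z.to_nat (j - 1))).
Proof. intros z j Hj. replace (Z.to_nat j) with (S (Z.to_nat (j - 1))) by lia. reflexivity. Qed.

Definition RZ (g0 gx gl gd : Z -> Cplx) (N i j : Z) : Cplx :=
  Cmul (Cmul (Cmul (Cpow (g0 2%Z) (Z.to_nat j))
     (Cdiv (EP g0 (2 * N) N) (Cmul (EP g0 (2 * (N - j)) (N - j)) (EP g0 (2 * j) j))))
     (Cdiv (EP gl (2 * (i + j)) (N - j)) (EP gx 0 N)))
     (Cdiv (Cmul (EP gd (2 * (i + 2 * j - 1)) j) (EP gx (- 2 * (i + j)) (N - j)))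
           (Cmul (EP gl (2 * j) (N - j)) (EP gl (2 * (2 * j - N - 1)) j)))%Z.

Ltac pF g k m := match goal with |- context [EP g ?k' ?m'] =>
   assert (k' = k)%Z by lia; assert (m' = m)%Z by lia;
   rewrite (EP_F g k' (m' - 1) m') by lia end.
Ltac pB g k m := match goal with |- context [EP g ?k' ?m'] =>
   assert (k' = k)%Z by lia; assert (m' = m)%Z by lia;
   rewrite (EP_B g k' (m' - 1) m') by lia end.
Ltac p0 := repeat match goal with |- context [EP ?g ?k ?m] =>
   rewrite (EP_zero g k m) by lia end.

Ltac unifyZ :=
  repeat match goal with
  | |- context [EP ?g ?k1 ?n1] => match goal with |- context [EP g ?k2 ?n2] =>
       tryif (constr_eq k1 k2; constr_eq n1 n2) then fail else
       (replace (EP g k1 n1) with (EP g k2 n2) by (f_equal; lia)) end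
  end;
  idtac.
Ltac unifyG g :=
  repeat match goal with
  | |- context [g ?k1] => match goal with |- context [g ?k2] =>
       tryif constr_eq k1 k2 then fail else
       (replace (g k1) with (g k2) by (f_equal; lia)) end
  end.

Ltac nzsolve H0 Hx Hl :=
  repeat match goal with
  | |- _ /\ _ => split
  | |- EP ?g _ _ <> C0 => apply EP_nz; intros ? ?
  | |- ?g0' ?k <> C0 => (apply H0 + apply Hx + apply Hl); [Z.div_mod_to_equations; lia | lia]
  end.

Section Rec.
Variables (g0 gx gl gd : Z -> Cplx) (N i : Z).
Hypothesis HN : (1 <= N)%Z.
Hypothesis Hi : (0 <= i)%Z.
Hypothesis H0 : forall k, (k mod 2 = 0)%Z -> (2 <= k <= 2 * N)%Z -> g0 k <> C0.
Hypothesis Hx : forall k, (k mod 2 = 0)%Z -> (- 2 * (N - 1) <= k <= 0)%Z -> gx k <> C0.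
Hypothesis Hl : forall k, (k mod 2 = 0)%Z -> (- 2 * (N + 1) <= k <= 2 * (N + 1))%Z -> gl k <> C0.

Ltac pS g k m := match goal with |- context [EP g ?k' ?m'] =>
   assert (k' = k)%Z by lia; assert (m' = m)%Z by lia;
   rewrite (EP_S g (k' + 2) k' m'); [ | lia | lia | nzsolve H0 Hx Hl] end.


Definition w0 (j : Z) := Cdiv (Cmul (gx (- 2 * i)%Z) (gl (2 * (2 * j - N + 1) + 2 * i)%Z))
                              (Cmul (gx 0%Z) (gl (2 * (2 * j - N + 1))%Z)).
Definition w1 (j : Z) := Cdiv (Cmul (gd (2 * (2 * j - N - 1) + 2 * i + 2)%Z) (g0 2%Z))
                              (Cmul (gx 0%Z) (gl (2 * (2 * j - N - 1))%Z)).
Let gx' := fun n => gx (n + -2)%Z.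
Let gd' := fun n => gd (n + 2)%Z.

Lemma rec_a : RZ g0 gx gl gd N i 0 = Cmul (w0 0) (RZ g0 gx' gl gd' (N - 1) i 0).
Proof.
  unfold RZ, w0, gx', gd'. rewrite !EP_shift.
  pB gl (2 * i)%Z N. pF gx 0%Z N. pF gx (-2 * i)%Z N. pB gl 0%Z N.
  p0. unifyZ. unifyG g0; unifyG gx; unifyG gl; unifyG gd. field. nzsolve H0 Hx Hl.
Qed.

Lemma rec_b : RZ g0 gx gl gd N i N = Cmul (w1 N) (RZ g0 gx' gl gd' (N - 1) (i + 1) (N - 1)).
Proof.
  unfold RZ, w1, gx', gd'. rewrite !EP_shift.
  rewrite (Cpow_S (g0 2%Z) N) by lia.
  pF gx 0%Z N. pB gd (2 * (i + 2 * N - 1))%Z N. pF gl (2 * (N - 1))%Z N.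
  p0. unifyZ. unifyG g0; unifyG gx; unifyG gl; unifyG gd. field. nzsolve H0 Hx Hl.
Qed.

Lemma rec_c : forall j, (1 <= j <= N - 1)%Z ->
  Cadd (Cmul (Cmul (Cmul (gx (-2 * i)%Z) (g0 (2 * (N - j))%Z)) (gd (2 * (i + 2 * j))%Z)) (gl (2 * (j - N))%Z))
       (Cmul (Cmul (Cmul (gd (2 * (i + 2 * j - N))%Z) (g0 (2 * j)%Z)) (gx (-2 * (i + N))%Z)) (gl (2 * j)%Z))
  = Cmul (Cmul (Cmul (g0 (2 * N)%Z) (gd (2 * (i + j))%Z)) (gx (-2 * (i + j))%Z)) (gl (2 * (2 * j - N))%Z) ->
  RZ g0 gx gl gd N i j = Cadd (Cmul (w0 j) (RZ g0 gx' gl gd' (N - 1) i j))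
                              (Cmul (w1 j) (RZ g0 gx' gl gd' (N - 1) (i + 1) (j - 1))).
Proof.
  intros j Hj HT. revert HT.
  unfold RZ, w0, w1, gx', gd'. rewrite !EP_shift.
  rewrite (Cpow_S (g0 2%Z) j) by lia.
  pF g0 (2 * N)%Z N.
  repeat pF g0 (2 * (N - j))%Z (N - j)%Z.
  pF g0 (2 * j)%Z j.
  repeat pB gl (2 * (i + j))%Z (N - j)%Z.
  pB gl (2 * j)%Z (N - j)%Z.
  pB gl (2 * j - 2)%Z (N - j)%Z.
  pS gl (2 * j - 2)%Z (N - j - 1)%Z.
  pF gl (2 * (2 * j - N - 1))%Z j.
  pF gl (4 * j - 2 * N)%Z j.
  repeat pS gl (4 * j - 2 * N - 4)%Z (j - 1)%Z.
  pF gx 0%Z N.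
  pF gx (-2 * (i + j))%Z (N - j)%Z.
  pB gx (-2 * (i + j) - 2)%Z (N - j)%Z.
  pB gd (2 * (i + 2 * j - 1))%Z j.
  pF gd (2 * (i + 2 * j))%Z j.
  unifyZ. unifyG g0; unifyG gx; unifyG gl; unifyG gd.
  intro HT.
  match goal with |- context [gd ?k] => assert (k = 2*(i+j))%Z by lia; set (P := gd k) in * end.
  match goal with |- context [gx ?k] => assert (k = -2*(i+j))%Z by lia; set (Q := gx k) in * end.
  clearbody P Q.
  match type of HT with ?A = Cmul (Cmul (Cmul ?a P) Q) ?b =>
    assert (HPQ : Cmul P Q = Cdiv A (Cmul a b)) by (rewrite HT; field; nzsolve H0 Hx Hl) end.
  match goal with |- ?L = ?R => let L1 := eval pattern P, Q in L in
    match L1 with ?F _ _ => assert (HL : L = Cmul (F Defs.C1 Defs.C1) (Cmul P Q)) by (cbv beta; field; nzsolve H0 Hx Hl) end end.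
  rewrite HL, HPQ. field. nzsolve H0 Hx Hl.
Qed.
End Rec.

Ltac cr := apply Ceq; cbn [Re Im Cadd Csub Copp Cmul ZtoC RtoC];
  repeat (rewrite plus_IZR || rewrite minus_IZR || rewrite mult_IZR || rewrite opp_IZR); field.

Definition RR f eta Lam (JZ iZ j : Z) (v lam : Cplx) : Cplx :=
  let e (n : Z) := Cmul (ZtoC n) eta in
  let P := epoch f eta in
       Cmul (Cmul (Cmul
         (Cpow (f (e 2%Z)) (Z.to_nat j))
         (Cdiv (P (e (2 * JZ)%Z) JZ)
               (Cmul (P (e (2 * (JZ - j))%Z) (JZ - j)%Z) (P (e (2 * j)%Z) j))))
         (Cdiv (P (Cadd lam (e (2 * (iZ + j))%Z)) (JZ - j)%Z)
               (P (Csub (Cmul eta Lam) v) JZ)))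
         (Cdiv (Cmul (P (Csub (Cadd (Cadd v lam) (e (2 * (iZ + 2 * j - 1))%Z)) (Cmul eta Lam)) j)
                     (P (Csub (Csub (Cmul eta Lam) (e (2 * (iZ + j))%Z)) v) (JZ - j)%Z))
               (Cmul (P (Cadd lam (e (2 * j)%Z)) (JZ - j)%Z)
                     (P (Cadd lam (e (2 * (2 * j - JZ - 1))%Z)) j))).

Lemma epoch_EP : forall f eta a g k n, (0 <= n)%Z ->
  (forall m : nat, f (Csub a (Cmul (ZtoC (2 * Z.of_nat m)) eta)) = g (k - 2 * Z.of_nat m)%Z) ->
  epoch f eta a n = EP g k n.
Proof.
  intros f eta a g k n Hn H. unfold epoch. replace (0 <=? n)%Z with true by (symmetry; apply Z.leb_le; lia).
  unfold EP. f_equal. apply map_ext. auto.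
Qed.

Section Conc.
Variables (f : Cplx -> Cplx) (eta Lam lam : Cplx).

Definition g0 n := f (Cmul (ZtoC n) eta).
Definition gx v n := f (Cadd (Csub (Cmul eta Lam) v) (Cmul (ZtoC n) eta)).
Definition gl n := f (Cadd lam (Cmul (ZtoC n) eta)).
Definition gd v n := f (Cadd (Csub lam (Csub (Cmul eta Lam) v)) (Cmul (ZtoC n) eta)).

Lemma RR_RZ : forall N i j v, (0 <= j <= N)%Z ->
  RR f eta Lam N i j v lam = RZ g0 (gx v) gl (gd v) N i j.
Proof.
  intros N i j v Hj. unfold RR, RZ. cbv zeta.
  repeat match goal with
  | |- context [epoch f eta ?a ?n] =>
     let tac g k := rewrite (epoch_EP f eta a g k n) by
        (lia || (intro; unfold g0, gx, gl, gd; f_equal; cr)) in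
     lazymatch a with
     | Cmul (ZtoC ?k) eta => tac g0 k
     | Cadd lam (Cmul (ZtoC ?k) eta) => tac gl k
     | Csub (Cmul eta Lam) v => tac (gx v) 0%Z
     | Csub (Csub (Cmul eta Lam) (Cmul (ZtoC ?k) eta)) v => tac (gx v) (- k)%Z
     | Csub (Cadd (Cadd v lam) (Cmul (ZtoC ?k) eta)) (Cmul eta Lam) => tac (gd v) k
     end
  end.
  unfold g0. repeat f_equal; lia.
Qed.

Lemma W1_0 : forall a v phi, (0 <= a)%Z ->
  W1 f eta Lam a 0 a 0 v phi =
  Cdiv (Cmul (f (Csub (Cmul eta (Csub Lam (ZtoC (2 * a)))) v)) (f (Cadd phi (Cmul (ZtoC (2 * a)) eta))))
       (Cmul (f (Csub (Cmul eta Lam) v)) (f phi)).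
Proof.
  intros a v phi Ha. unfold W1. replace (a <? 0)%Z with false by (symmetry; apply Z.ltb_ge; lia).
  cbv zeta. rewrite !Z.eqb_refl. reflexivity.
Qed.

Lemma W1_1 : forall a v phi, (0 <= a)%Z ->
  W1 f eta Lam a 1 (a + 1) 0 v phi =
  Cdiv (Cmul (f (Cadd (Cadd v phi) (Cmul eta (Csub (ZtoC (2 * a + 2)) Lam)))) (f (Cmul (ZtoC 2) eta)))
       (Cmul (f (Csub (Cmul eta Lam) v)) (f phi)).
Proof.
  intros a v phi Ha. unfold W1. replace (a <? 0)%Z with false by (symmetry; apply Z.ltb_ge; lia).
  cbv zeta. rewrite !Z.eqb_refl. reflexivity.
Qed.

Lemma W1_0g : forall M i j v, (0 <= i)%Z ->
  W1 f eta Lam i 0 i 0 v (Cadd lam (Cmul (ZtoC (2 * (2 * j - M))) eta)) =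
  w0 (gx v) gl (M + 1) i j.
Proof.
  intros. rewrite W1_0 by auto. unfold w0, gx, gl. f_equal; f_equal; f_equal; cr.
Qed.

Lemma W1_1g : forall M i j v, (0 <= i)%Z ->
  W1 f eta Lam i 1 (i + 1) 0 v (Cadd lam (Cmul (ZtoC (2 * (2 * (j - 1) - M))) eta)) =
  w1 g0 (gx v) gl (gd v) (M + 1) i j.
Proof.
  intros. rewrite W1_1 by auto. unfold w1, gx, gl, gd, g0. f_equal; f_equal; f_equal; cr.
Qed.
End Conc.



Section Main.
Variables (f : Cplx -> Cplx) (eta Lam lam : Cplx).
Hypothesis HTT : TT f.

Lemma HT_inst : forall N i j v,
  Cadd (Cmul (Cmul (Cmul (gx f eta Lam v (-2 * i)%Z) (g0 f eta (2 * (N - j))%Z)) (gd f eta Lam lam v (2 * (i + 2 * j))%Z)) (gl f eta lam (2 * (j - N))%Z))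
       (Cmul (Cmul (Cmul (gd f eta Lam lam v (2 * (i + 2 * j - N))%Z) (g0 f eta (2 * j)%Z)) (gx f eta Lam v (-2 * (i + N))%Z)) (gl f eta lam (2 * j)%Z))
  = Cmul (Cmul (Cmul (g0 f eta (2 * N)%Z) (gd f eta Lam lam v (2 * (i + j))%Z)) (gx f eta Lam v (-2 * (i + j))%Z)) (gl f eta lam (2 * (2 * j - N))%Z).
Proof.
  intros N i j v.
  set (x := Csub (Cmul eta Lam) v).
  set (hl := Cmul lam (RtoC (1/2))).
  pose proof (HTT (Cadd hl (Cmul (ZtoC (2 * j)) eta)) (Csub hl (Cmul (ZtoC (2 * (N - j))) eta))
                  (Csub (Csub x hl) (Cmul (ZtoC (2 * (i + j))) eta)) hl) as E.
  unfold FF in E. unfold g0, gx, gl, gd.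
  repeat match type of E with context [f ?a] => match goal with |- context [f ?b] =>
     tryif constr_eq a b then fail else
     (replace (f a) with (f b) in E by (f_equal; subst x hl; cr)) end end.
  match type of E with ?A = ?B => transitivity A; [ring | rewrite E; ring] end.
Qed.

Definition Hyps (J : Z) (v : Cplx) : Prop :=
  (forall m : Z, (1 <= m <= J)%Z -> f (Cmul (ZtoC (2 * m)) eta) <> C0) /\ (forall m : Z, (0 <= m < J)%Z -> f (Csub (Csub (Cmul eta Lam) v) (Cmul (ZtoC (2 * m)) eta)) <> C0) /\ (forall m : Z, (- (J + 1) <= m <= J + 1)%Z -> f (Cadd lam (Cmul (ZtoC (2 * m)) eta)) <> C0).

Lemma Hyps_step : forall J v, (0 <= J)%Z -> Hyps (J + 1) v -> Hyps J (Cadd v (Cmul (ZtoC 2) eta)).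
Proof.
  intros J v HJ [H1 [H2 H3]]. split; [|split].
  - intros m Hm. apply H1. lia.
  - intros m Hm. replace (Csub (Csub (Cmul eta Lam) (Cadd v (Cmul (ZtoC 2) eta))) (Cmul (ZtoC (2 * m)) eta))
      with (Csub (Csub (Cmul eta Lam) v) (Cmul (ZtoC (2 * (m + 1))) eta)) by cr. apply H2. lia.
  - intros m Hm. apply H3. lia.
Qed.

Lemma even_half : forall k, (k mod 2 = 0)%Z -> k = (2 * (k / 2))%Z.
Proof. intros k Hk. Z.div_mod_to_equations. lia. Qed.

Lemma Hyps_g : forall N v, Hyps N v ->
  (forall k, (k mod 2 = 0)%Z -> (2 <= k <= 2 * N)%Z -> g0 f eta k <> C0) /\ (forall k, (k mod 2 = 0)%Z -> (- 2 * (N - 1) <= k <= 0)%Z -> gx f eta Lam v k <> C0) /\ (forall k, (k mod 2 = 0)%Z -> (- 2 * (N + 1) <= k <= 2 * (N + 1))%Z -> gl f eta lam k <> C0).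
Proof.
  intros N v [H1 [H2 H3]]. split; [|split]; intros k Hk Hr; rewrite (even_half k Hk) in *.
  - apply H1. lia.
  - unfold gx. replace (Cadd (Csub (Cmul eta Lam) v) (Cmul (ZtoC (2 * (k / 2))) eta))
      with (Csub (Csub (Cmul eta Lam) v) (Cmul (ZtoC (2 * (- (k / 2)))) eta)) by cr. apply H2. lia.
  - apply H3. lia.
Qed.

Lemma gx_shift : forall v, gx f eta Lam (Cadd v (Cmul (ZtoC 2) eta)) = (fun n => gx f eta Lam v (n + -2)%Z).
Proof. intros v. apply functional_extensionality. intros n. unfold gx. f_equal. cr. Qed.
Lemma gd_shift : forall v, gd f eta Lam lam (Cadd v (Cmul (ZtoC 2) eta)) = (fun n => gd f eta Lam lam v (n + 2)%Z).
Proof. intros v. apply functional_extensionality. intros n. unfold gd. f_equal. cr. Qed.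

Lemma main_ind : forall (J : nat) i j v, (0 <= i)%Z -> (0 <= j <= Z.of_nat J)%Z ->
  Hyps (Z.of_nat J) v ->
  SJ f eta Lam J i j v lam = RR f eta Lam (Z.of_nat J) i j v lam.
Proof.
  induction J as [|J IH]; intros i j v Hi Hj HH.
  - assert (j = 0%Z) by (simpl in Hj; lia). subst j.
    rewrite RR_RZ by (simpl; lia). unfold RZ. simpl Z.of_nat.
    p0.
    unfold SJ, WJcol. simpl. rewrite iseq_1, Z.add_0_r, Z.eqb_refl.
    replace (0 <=? i)%Z with true by (symmetry; apply Z.leb_le; lia). simpl.
    apply Ceq; simpl; field.
  - rewrite SJ_rec by auto.
    assert (HH' := Hyps_step (Z.of_nat J) v ltac:(lia) ltac:(replace (Z.of_nat J + 1)%Z with (Z.of_nat (S J)) by lia; exact HH)).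
    rewrite W1_0g, W1_1g by auto.
    destruct (Hyps_g _ _ HH) as [G0 [Gx Gl]].
    set (N := Z.of_nat (S J)) in *.
    assert (HN : Z.of_nat J = (N - 1)%Z) by (unfold N; lia).
    rewrite HN in *.
    replace (N - 1 + 1)%Z with N by lia.
    rewrite RR_RZ by lia.
    destruct (Z.eq_dec j 0) as [Hj0|Hj0]; [|destruct (Z.eq_dec j N) as [HjN|HjN]].
    + subst j. rewrite (SJ_out _ _ _ _ _ (0 - 1)%Z) by lia.
      rewrite IH by (auto; lia). rewrite RR_RZ by lia.
      rewrite gx_shift, gd_shift.
      rewrite (rec_a _ _ _ _ N i) by (auto; lia). ring.
    + subst j. rewrite (SJ_out _ _ _ J i N) by lia.
      rewrite IH by (auto; lia). rewrite RR_RZ by lia.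
      rewrite gx_shift, gd_shift.
      rewrite (rec_b _ _ _ _ N i) by (auto; lia). ring.
    + rewrite !IH by (auto; lia). rewrite !RR_RZ by lia.
      rewrite gx_shift, gd_shift.
      symmetry. apply rec_c; auto; try lia. apply HT_inst.
Qed.
End Main.

Definition zr (N : nat) : list Z := map (fun k : nat => (Z.of_nat k - Z.of_nat N)%Z) (seq 0 (2 * N + 1)).

Lemma zr_In : forall N z, In z (zr N) <-> (- Z.of_nat N <= z <= Z.of_nat N)%Z.
Proof.
  intros N z. unfold zr. rewrite in_map_iff. split.
  - intros [k [<- Hk]]. apply in_seq in Hk. lia.
  - intros Hz. exists (Z.to_nat (z + Z.of_nat N)). split; [lia|]. apply in_seq. lia.
Qed.

Lemma zr_NoDup : forall N, NoDup (zr N).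
Proof.
  intros N. unfold zr. apply Injective_map_NoDup; [|apply seq_NoDup].
  intros a b H. lia.
Qed.

Lemma zr_len : forall N, length (zr N) = (2 * N + 1)%nat.
Proof. intros; unfold zr; rewrite length_map, length_seq; reflexivity. Qed.

Lemma NoDup_prod : forall A B (l1 : list A) (l2 : list B), NoDup l1 -> NoDup l2 -> NoDup (list_prod l1 l2).
Proof.
  intros A B l1 l2 H1 H2. induction H1 as [|a l1 Ha H1 IH]; simpl; [constructor|].
  apply NoDup_app; auto.
  - apply Injective_map_NoDup; auto. intros x y H; injection H; auto.
  - intros [x y] Hin Hin2. apply in_map_iff in Hin. destruct Hin as [z [Hz _]]. injection Hz; intros; subst.
    apply in_prod_iff in Hin2. tauto.
Qed.

Lemma Csum_perm : forall l1 l2, Permutation l1 l2 -> Csum l1 = Csum l2.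
Proof.
  intros l1 l2 H. induction H; simpl; auto.
  - rewrite IHPermutation; auto.
  - unfold Csum; simpl. ring.
  - congruence.
Qed.

Lemma Csum_app' : forall l1 l2, Csum (l1 ++ l2) = Cadd (Csum l1) (Csum l2).
Proof. induction l1; intros; simpl; [unfold Csum; simpl; ring|]. unfold Csum in *; simpl. rewrite IHl1; ring. Qed.

Lemma Csum_prod : forall A B (F : A * B -> Cplx) l1 l2,
  Csum (map F (list_prod l1 l2)) = Csum (map (fun a => Csum (map (fun b => F (a, b)) l2)) l1).
Proof.
  intros A B F l1 l2. induction l1 as [|a l1 IH]; simpl; auto.
  rewrite map_app, Csum_app', IH, map_map. reflexivity.
Qed.

Lemma Csum_mul_l : forall A (c : Cplx) (g : A -> Cplx) l,
  Cmul c (Csum (map g l)) = Csum (map (fun x => Cmul c (g x)) l).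
Proof. induction l; unfold Csum in *; simpl; [ring|]. rewrite <- IHl; ring. Qed.

Lemma Csum_mul : forall A B (a : A -> Cplx) (b : B -> Cplx) l1 l2,
  Cmul (Csum (map a l1)) (Csum (map b l2)) =
  Csum (map (fun pr => Cmul (a (fst pr)) (b (snd pr))) (list_prod l1 l2)).
Proof.
  intros. rewrite Csum_prod. simpl.
  induction l1 as [|x l1 IH]; [unfold Csum; simpl; ring|].
  simpl map. rewrite <- (Csum_mul_l B (a x) b l2). unfold Csum at 1 3; simpl fold_right. fold (Csum (map a l1)). fold (Csum (map (fun a0 : A => Csum (map (fun b0 : B => (a a0 * b b0)%Cplx) l2)) l1)). rewrite <- IH. ring.
Qed.

Lemma Csum_filter : forall A (p : A -> bool) (F : A -> Cplx) l,
  Csum (map F (filter p l)) = Csum (map (fun x => if p x then F x else C0) l).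
Proof.
  induction l; simpl; auto. destruct (p a); unfold Csum in *; simpl; rewrite IHl; [|ring]. reflexivity.
Qed.

Lemma Csum_ext : forall A (F G : A -> Cplx) l, (forall x, In x l -> F x = G x) -> Csum (map F l) = Csum (map G l).
Proof. intros. f_equal. apply map_ext_in. auto. Qed.

Lemma Csum_sub : forall A (F G : A -> Cplx) l,
  Csub (Csum (map F l)) (Csum (map G l)) = Csum (map (fun x => Csub (F x) (G x)) l).
Proof. induction l; unfold Csum in *; simpl; [apply Ceq; simpl; ring|]. rewrite <- IHl; ring. Qed.

Definition n1 (z : Cplx) : R := Rabs (Re z) + Rabs (Im z).

Lemma n1_add : forall z w, n1 (Cadd z w) <= n1 z + n1 w.
Proof.
  intros [a b] [c d]; unfold n1; simpl.
  pose proof (Rabs_triang a c); pose proof (Rabs_triang b d); lra.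
Qed.

Lemma n1_sum_bound : forall A (F : A -> Cplx) l M,
  (forall x, In x l -> n1 (F x) <= M) -> n1 (Csum (map F l)) <= INR (length l) * M.
Proof.
  intros A F l M H. induction l as [|a l IH]; cbn [length map].
  - unfold n1; simpl. rewrite Rabs_R0. lra.
  - pose proof (n1_add (F a) (Csum (map F l))). rewrite S_INR.
    assert (n1 (F a) <= M) by (apply H; left; auto).
    assert (n1 (Csum (map F l)) <= INR (length l) * M) by (apply IH; intros; apply H; right; auto).
    unfold Csum in *; cbn [fold_right] in *. lra.
Qed.

Lemma n1_Cexp : forall w, n1 (Cexp w) <= 2 * exp (Re w).
Proof.
  intros [a b]; unfold n1; simpl. pose proof (exp_pos a).
  rewrite !Rabs_mult, (Rabs_right (exp a)) by lra.
  pose proof (COS_bound b). pose proof (SIN_bound b).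
  assert (Rabs (cos b) <= 1) by (apply Rabs_le; lra).
  assert (Rabs (sin b) <= 1) by (apply Rabs_le; lra). nra.
Qed.

Lemma n1_ge0 : forall z, 0 <= n1 z.
Proof. intros; unfold n1; pose proof (Rabs_pos (Re z)); pose proof (Rabs_pos (Im z)); lra. Qed.

Lemma squeeze0 : forall u v : nat -> R, (forall n, Rabs (u n) <= v n) -> Un_cv v 0 -> Un_cv u 0.
Proof.
  intros u v H Hv eps Heps. destruct (Hv eps Heps) as [N HN]. exists N. intros n Hn.
  specialize (HN n Hn). unfold R_dist in *. rewrite Rminus_0_r in *.
  pose proof (H n). pose proof (Rle_abs (v n)). lra.
Qed.

Lemma cv_const_inv : forall C, Un_cv (fun n => C * / (INR n + 1)) 0.
Proof.
  intros C. replace 0 with (C * 0) by ring. apply CV_mult.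
  - intros eps Heps. exists 0%nat. intros. unfold R_dist. rewrite Rminus_diag, Rabs_R0. auto.
  - exact RinvN_cv.
Qed.

Lemma exp_sq : forall t, 0 < t -> t * t / 4 < exp t.
Proof.
  intros t Ht. replace t with (t / 2 + t / 2) at 3 by field. rewrite exp_plus.
  assert (H := exp_ineq1 (t / 2) ltac:(lra)). nra.
Qed.

Lemma key_bound : forall a n, 0 < a -> 1 <= n ->
  (2 * n + 1) * (2 * n + 1) * (n + 1) * / exp (a * (n * n)) <= 72 / (a * a).
Proof.
  intros a n Ha Hn.
  assert (Ht : 0 < a * (n * n)) by (apply Rmult_lt_0_compat; nra).
  pose proof (exp_sq _ Ht) as He.
  set (E := exp (a * (n * n))) in *.
  assert (HE : 0 < E) by (unfold E; apply exp_pos).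
  assert (H1 : (2 * n + 1) * (2 * n + 1) * (n + 1) <= 18 * (n * n * n)) by (assert (0 <= (n - 1) * (n * n)) by (apply Rmult_le_pos; nra); assert (0 <= (n - 1) * n) by nra; nra).
  apply Rle_trans with (18 * (n * n * n) * / E).
  { apply Rmult_le_compat_r; [left; apply Rinv_0_lt_compat; auto | auto]. }
  apply Rle_trans with (18 * (n * n * n) * / (a * (n * n) * (a * (n * n)) / 4)).
  { apply Rmult_le_compat_l; [nra|]. apply Rinv_le_contravar; [|lra]. 
    apply Rmult_lt_0_compat; [nra|lra]. }
  replace (18 * (n * n * n) * / (a * (n * n) * (a * (n * n)) / 4)) with (72 / (a * a) * / n) by (field; nra).
  replace (72 / (a * a)) with (72 / (a * a) * 1) at 2 by ring.
  apply Rmult_le_compat_l.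
  - apply Rlt_le, Rdiv_lt_0_compat; nra.
  - replace 1 with (/ 1) by field. apply Rinv_le_contravar; lra.
Qed.

Lemma gauss_cv : forall a K, 0 < a ->
  Un_cv (fun N => INR ((2 * N + 1) * (2 * N + 1)) * (2 * exp (K - a * (INR N * INR N)))) 0.
Proof.
  intros a K Ha.
  apply squeeze0 with (v := fun n => (2 * exp K * (1 + 72 / (a * a))) * / (INR n + 1)); [|apply cv_const_inv].
  intros N. set (n := INR N).
  assert (Hn : 0 <= n) by apply pos_INR.
  rewrite mult_INR, plus_INR, mult_INR. replace (INR 2) with 2 by (simpl; ring). replace (INR 1) with 1 by reflexivity. fold n.
  unfold Rminus. rewrite exp_plus, exp_Ropp.
  pose proof (exp_pos K). pose proof (exp_pos (a * (n * n))).
  set (E := exp (a * (n * n))) in *.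
  rewrite Rabs_right.
  2:{ apply Rle_ge. apply Rmult_le_pos; [nra|]. apply Rmult_le_pos; [lra|]. apply Rmult_le_pos; [lra|].
      left; apply Rinv_0_lt_compat; auto. }
  assert (Hb : (2 * n + 1) * (2 * n + 1) * (n + 1) * / E <= 1 + 72 / (a * a)).
  { destruct (Rle_lt_dec 1 n) as [H1|H1].
    - pose proof (key_bound a n Ha H1) as HK. fold E in HK. assert (0 < 72 / (a * a)) by (apply Rdiv_lt_0_compat; [lra | apply Rmult_lt_0_compat; lra]). lra.
    - assert (N = 0%nat). { destruct N; auto. unfold n in H1. rewrite S_INR in H1. pose proof (pos_INR N). lra. }
      subst N. unfold n in *. simpl INR in *. unfold E. replace (a * (0 * 0)) with 0 by ring. rewrite exp_0.
      assert (0 < 72 / (a * a)) by (apply Rdiv_lt_0_compat; [lra | apply Rmult_lt_0_compat; lra]). replace (/ 1) with 1 by field. lra. }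
  apply Rmult_le_reg_r with (INR N + 1). { pose proof (pos_INR N); lra. }
  fold n. replace (2 * exp K * (1 + 72 / (a * a)) * / (n + 1) * (n + 1)) with (2 * exp K * (1 + 72 / (a * a))) by (field; repeat split; try lra; try (apply Rgt_not_eq; lra)).
  replace ((2 * n + 1) * (2 * n + 1) * (2 * (exp K * / E)) * (n + 1))
    with (2 * exp K * ((2 * n + 1) * (2 * n + 1) * (n + 1) * / E)) by ring.
  apply Rmult_le_compat_l; [lra|auto].
Qed.

Definition ev (p : Z) : bool := (p mod 2 =? 0)%Z.
Definition sgn (p : Z) : Cplx := if ev p then Defs.C1 else Copp Defs.C1.

Lemma ev_succ : forall x, ev (Z.succ x) = negb (ev x).
Proof.
  intros x. unfold ev. destruct (Z.eqb_spec (x mod 2) 0), (Z.eqb_spec (Z.succ x mod 2) 0); simpl; auto;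
  Z.div_mod_to_equations; lia.
Qed.
Lemma ev_pred : forall x, ev (Z.pred x) = negb (ev x).
Proof.
  intros x. unfold ev. destruct (Z.eqb_spec (x mod 2) 0), (Z.eqb_spec (Z.pred x mod 2) 0); simpl; auto;
  Z.div_mod_to_equations; lia.
Qed.

Lemma cos_sin_int : forall p, cos (IZR p * PI) = (if ev p then 1 else -1) /\ sin (IZR p * PI) = 0.
Proof.
  apply Z.peano_ind.
  - simpl. rewrite Rmult_0_l, cos_0, sin_0. auto.
  - intros x [Hc Hs]. rewrite succ_IZR, Rmult_plus_distr_r, Rmult_1_l, neg_cos, neg_sin, ev_succ.
    rewrite Hc, Hs. destruct (ev x); simpl; split; ring.
  - intros x [Hc Hs]. rewrite ev_pred, <- Z.sub_1_r, minus_IZR.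
    replace ((IZR x - 1) * PI) with ((IZR x - 1) * PI + PI - PI) by ring.
    replace ((IZR x - 1) * PI + PI) with (IZR x * PI) by ring.
    replace (IZR x * PI - PI) with (IZR x * PI + PI - 2 * PI) by ring.
    rewrite cos_minus, sin_minus, cos_2PI, sin_2PI, neg_cos, neg_sin, Hc, Hs.
    destruct (ev x); simpl; split; ring.
Qed.

Lemma Cexp_pi : forall p, Cexp (Cmul (Cmul CPI Ci) (ZtoC p)) = sgn p.
Proof.
  intros p. unfold sgn. destruct (cos_sin_int p) as [Hc Hs].
  apply Ceq; cbn [Cexp Re Im Cmul CPI Ci ZtoC RtoC].
  - replace ((PI * 0 - 0 * 1) * IZR p - (PI * 1 + 0 * 0) * 0) with 0 by ring.
    replace ((PI * 0 - 0 * 1) * 0 + (PI * 1 + 0 * 0) * IZR p) with (IZR p * PI) by ring.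
    rewrite exp_0, Hc. destruct (ev p); simpl; ring.
  - replace ((PI * 0 - 0 * 1) * IZR p - (PI * 1 + 0 * 0) * 0) with 0 by ring.
    replace ((PI * 0 - 0 * 1) * 0 + (PI * 1 + 0 * 0) * IZR p) with (IZR p * PI) by ring.
    rewrite exp_0, Hs. destruct (ev p); simpl; ring.
Qed.

Section Th.
Variable tau : Cplx.

Definition G (n : Z) (z : Cplx) : Cplx :=
  Cexp (Cadd (Cmul (Cmul (Cmul CPI Ci) tau) (Cmul (RtoC (1/2)) (ZtoC (n * n))))
             (Cmul (Cmul (RtoC 2) (Cmul CPI Ci)) (Cmul (ZtoC n) z))).

Definition U (x y : Cplx) (pr : Z * Z) : Cplx :=
  Cmul (sgn (fst pr)) (Cmul (G (fst pr) x) (G (snd pr) y)).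

Definition phi (pr : Z * Z) : Z * Z := ((fst pr + snd pr + 1)%Z, (fst pr - snd pr)%Z).

Lemma TU : forall j k x y, Cmul (theta_term tau (Cadd x y) j) (theta_term tau (Csub x y) k) = U x y (phi (j, k)).
Proof.
  intros j k x y. unfold U, phi, G, theta_term. simpl fst. simpl snd.
  rewrite <- Cexp_pi, <- !Cexp_add. f_equal.
  apply Ceq; cbn [Re Im Cadd Csub Copp Cmul ZtoC RtoC CPI Ci];
  repeat (rewrite plus_IZR || rewrite minus_IZR || rewrite mult_IZR || rewrite opp_IZR); field.
Qed.
End Th.

Section Th.
Variable tau : Cplx.

Definition box (N : nat) := list_prod (zr N) (zr N).
Definition Be N x := Csum (map (fun p => if ev p then G tau p x else C0) (zr N)).
Definition Bo N x := Csum (map (fun p => if ev p then C0 else G tau p x) (zr N)).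
Definition DN N x y := Csub (Cmul (Be N x) (Bo N y)) (Cmul (Bo N x) (Be N y)).
Definition oddb (pr : Z * Z) : bool := ((fst pr + snd pr) mod 2 =? 1)%Z.
Definition inR (N : nat) (pr : Z * Z) : bool :=
  (Z.leb (Z.abs (fst pr + snd pr + 1)) (Z.of_nat N) && Z.leb (Z.abs (fst pr - snd pr)) (Z.of_nat N))%bool.

Lemma theta_zr : forall z N, theta_partial tau z N = Copp (Csum (map (theta_term tau z) (zr N))).
Proof. intros. unfold theta_partial, zr. rewrite map_map. reflexivity. Qed.

Lemma thth : forall N x y,
  Cmul (theta_partial tau (Cadd x y) N) (theta_partial tau (Csub x y) N) =
  Csum (map (fun pr => U tau x y (phi pr)) (box N)).
Proof.
  intros. rewrite !theta_zr.
  transitivity (Cmul (Csum (map (theta_term tau (Cadd x y)) (zr N))) (Csum (map (theta_term tau (Csub x y)) (zr N)))); [ring|].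
  rewrite Csum_mul. unfold box. apply Csum_ext. intros [j k] _. simpl. apply TU.
Qed.

Lemma DN_sum : forall N x y,
  DN N x y = Csum (map (fun pr => if oddb pr then U tau x y pr else C0) (box N)).
Proof.
  intros. unfold DN, Be, Bo. rewrite !Csum_mul, Csum_sub. unfold box. apply Csum_ext.
  intros [p q] _. unfold oddb, U, sgn; simpl.
  destruct (ev p) eqn:Ep; destruct (ev q) eqn:Eq; unfold ev in Ep, Eq;
  apply Z.eqb_eq in Ep || apply Z.eqb_neq in Ep; apply Z.eqb_eq in Eq || apply Z.eqb_neq in Eq.
  - replace ((p + q) mod 2 =? 1)%Z with false by (symmetry; apply Z.eqb_neq; Z.div_mod_to_equations; lia). ring.
  - replace ((p + q) mod 2 =? 1)%Z with true by (symmetry; apply Z.eqb_eq; Z.div_mod_to_equations; lia). ring.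
  - replace ((p + q) mod 2 =? 1)%Z with true by (symmetry; apply Z.eqb_eq; Z.div_mod_to_equations; lia). ring.
  - replace ((p + q) mod 2 =? 1)%Z with false by (symmetry; apply Z.eqb_neq; Z.div_mod_to_equations; lia). ring.
Qed.

Lemma box_In : forall N j k, In (j, k) (box N) <-> (- Z.of_nat N <= j <= Z.of_nat N /\ - Z.of_nat N <= k <= Z.of_nat N)%Z.
Proof. intros. unfold box. rewrite in_prod_iff, !zr_In. tauto. Qed.

Lemma reindex : forall N (W : Z * Z -> Cplx),
  Csum (map (fun pr => if oddb pr then W pr else C0) (box N)) =
  Csum (map (fun pr => if inR N pr then W (phi pr) else C0) (box N)).
Proof.
  intros N W. rewrite <- !Csum_filter.
  rewrite <- (map_map phi W).
  apply Csum_perm. apply Permutation_map. symmetry.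
  apply NoDup_Permutation.
  - apply Injective_map_NoDup.
    + intros [a b] [c d] H. unfold phi in H; simpl in H. injection H. intros. f_equal; lia.
    + apply NoDup_filter. apply NoDup_prod; apply zr_NoDup.
  - apply NoDup_filter. apply NoDup_prod; apply zr_NoDup.
  - intros [p q]. rewrite in_map_iff, filter_In, box_In. split.
    + intros [[j k] [Hpq Hin]]. apply filter_In in Hin. destruct Hin as [Hin Hr].
      rewrite box_In in Hin. unfold phi in Hpq; simpl in Hpq. injection Hpq; intros; subst.
      unfold inR in Hr; simpl in Hr. apply andb_prop in Hr. destruct Hr as [H1 H2].
      apply Z.leb_le in H1. apply Z.leb_le in H2.
      unfold oddb; simpl. split; [lia|]. apply Z.eqb_eq. Z.div_mod_to_equations. lia.
    + intros [Hb Ho]. unfold oddb in Ho; simpl in Ho. apply Z.eqb_eq in Ho.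
      exists ((p + q - 1) / 2, (p - q - 1) / 2)%Z. unfold phi; simpl.
      split.
      * f_equal; Z.div_mod_to_equations; lia.
      * apply filter_In. rewrite box_In. unfold inR; simpl. split.
        -- Z.div_mod_to_equations; lia.
        -- apply andb_true_intro; split; apply Z.leb_le; Z.div_mod_to_equations; lia.
Qed.

Lemma diff_sum : forall N x y,
  Csub (Cmul (theta_partial tau (Cadd x y) N) (theta_partial tau (Csub x y) N)) (DN N x y) =
  Csum (map (fun pr => if inR N pr then C0 else U tau x y (phi pr)) (box N)).
Proof.
  intros. rewrite thth, DN_sum, reindex, Csum_sub. apply Csum_ext. intros pr _.
  destruct (inR N pr); apply Ceq; simpl; ring.
Qed.
End Th.

Lemma C_cv_mul : forall u w l m, C_cv u l -> C_cv w m -> C_cv (fun n => Cmul (u n) (w n)) (Cmul l m).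
Proof.
  intros u w l m [Hu1 Hu2] [Hw1 Hw2]. split; simpl.
  - apply CV_minus; apply CV_mult; auto.
  - apply CV_plus; apply CV_mult; auto.
Qed.
Lemma C_cv_add : forall u w l m, C_cv u l -> C_cv w m -> C_cv (fun n => Cadd (u n) (w n)) (Cadd l m).
Proof. intros u w l m [Hu1 Hu2] [Hw1 Hw2]. split; simpl; apply CV_plus; auto. Qed.
Lemma C_cv_sub : forall u w l m, C_cv u l -> C_cv w m -> C_cv (fun n => Csub (u n) (w n)) (Csub l m).
Proof. intros u w l m [Hu1 Hu2] [Hw1 Hw2]. split; simpl; apply CV_minus; auto. Qed.
Lemma C_cv_ext : forall u w l, (forall n, u n = w n) -> C_cv u l -> C_cv w l.
Proof.
  intros u w l H [H1 H2]. split.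
  - eapply Un_cv_ext; [|exact H1]. intros n; simpl; rewrite H; auto.
  - eapply Un_cv_ext; [|exact H2]. intros n; simpl; rewrite H; auto.
Qed.
Lemma C_cv_unique : forall u l m, C_cv u l -> C_cv u m -> l = m.
Proof.
  intros u l m [H1 H2] [H3 H4]. apply Ceq; eapply UL_sequence; eauto.
Qed.

Lemma exp_le' : forall a b, a <= b -> exp a <= exp b.
Proof. intros a b H. destruct (Rle_lt_or_eq_dec _ _ H) as [H'|H']; [left; apply exp_increasing; auto | subst; lra]. Qed.

Section Th.
Variable tau : Cplx.
Hypothesis Htau : 0 < Im tau.

Let c := PI * Im tau / 2.

Lemma c_pos : 0 < c.
Proof. unfold c. pose proof PI_RGT_0. apply Rmult_lt_0_compat; [apply Rmult_lt_0_compat|]; lra. Qed.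

Lemma theta_exp : forall z j, theta_term tau z j =
  Cexp (Cadd (Cmul (Cmul (Cmul CPI Ci) tau) (Cmul (Cadd (ZtoC j) (RtoC (1/2))) (Cadd (ZtoC j) (RtoC (1/2)))))
             (Cmul (Cmul (Cmul (RtoC 2) (Cmul CPI Ci)) (Cadd (ZtoC j) (RtoC (1/2)))) (Cadd z (RtoC (1/2))))).
Proof. reflexivity. Qed.

Lemma U_bound : forall N x y j k, inR N (j, k) = false ->
  n1 (U tau x y (phi (j, k))) <=
  2 * exp ((((2 * PI * Im x) ^ 2 + (2 * PI * Im y) ^ 2) / (2 * c)) - c / 2 * (INR N * INR N)).
Proof.
  intros N x y j k Hr. rewrite <- TU, !theta_exp, <- Cexp_add.
  eapply Rle_trans; [apply n1_Cexp|]. apply Rmult_le_compat_l; [lra|].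
  apply exp_le'.
  set (P := IZR (j + k + 1)). set (Q := IZR (j - k)). set (X := Im x). set (Y := Im y).
  pose proof c_pos as Hc.
  match goal with |- Re ?E <= _ => assert (HRe : Re E = - c * (P * P + Q * Q) - 2 * PI * (P * X + Q * Y)) end.
  { unfold c, P, Q, X, Y. cbn [Re Im Cadd Csub Copp Cmul ZtoC RtoC CPI Ci].
    repeat (rewrite plus_IZR || rewrite minus_IZR || rewrite mult_IZR || rewrite opp_IZR). field. }
  rewrite HRe.
  assert (HN : INR N * INR N <= P * P + Q * Q).
  { unfold inR in Hr; simpl in Hr. apply andb_false_iff in Hr.
    assert (HZ : (Z.of_nat N * Z.of_nat N <= (j + k + 1) * (j + k + 1) + (j - k) * (j - k))%Z).
    { assert (Hs : forall a n, (0 <= n)%Z -> (n < Z.abs a)%Z -> (n * n <= a * a)%Z)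
        by (intros a n Hn Ha; destruct (Z.abs_spec a) as [[_ H]|[_ H]]; rewrite H in Ha; nia).
      assert (0 <= (j + k + 1) * (j + k + 1))%Z by nia. assert (0 <= (j - k) * (j - k))%Z by nia.
      destruct Hr as [Hr|Hr]; apply Z.leb_gt in Hr; apply Hs in Hr; lia. }
    apply IZR_le in HZ. rewrite plus_IZR, !mult_IZR in HZ. rewrite INR_IZR_INZ. unfold P, Q. lra. }
  assert (Hsq : ((2 * PI * X) ^ 2 + (2 * PI * Y) ^ 2) / (2 * c) - c / 2 * (P * P + Q * Q)
               - (- c * (P * P + Q * Q) - 2 * PI * (P * X + Q * Y))
             = c / 2 * ((P + 2 * PI * X / c) ^ 2 + (Q + 2 * PI * Y / c) ^ 2)) by (field; lra).
  assert (0 <= c / 2 * ((P + 2 * PI * X / c) ^ 2 + (Q + 2 * PI * Y / c) ^ 2)).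
  { apply Rmult_le_pos; [lra|]. apply Rplus_le_le_0_compat; apply pow2_ge_0. }
  assert (c / 2 * (INR N * INR N) <= c / 2 * (P * P + Q * Q)) by (apply Rmult_le_compat_l; lra).
  lra.
Qed.

Lemma diff_cv : forall x y,
  C_cv (fun N => Csub (Cmul (theta_partial tau (Cadd x y) N) (theta_partial tau (Csub x y) N)) (DN tau N x y)) C0.
Proof.
  intros x y.
  set (K := ((2 * PI * Im x) ^ 2 + (2 * PI * Im y) ^ 2) / (2 * c)).
  assert (Hb : forall N, n1 (Csub (Cmul (theta_partial tau (Cadd x y) N) (theta_partial tau (Csub x y) N)) (DN tau N x y))
                 <= INR ((2 * N + 1) * (2 * N + 1)) * (2 * exp (K - c / 2 * (INR N * INR N)))).
  { intros N. rewrite diff_sum.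
    replace ((2 * N + 1) * (2 * N + 1))%nat with (length (box N)) by (unfold box; rewrite length_prod, zr_len; reflexivity).
    apply n1_sum_bound. intros [j k] _. destruct (inR N (j, k)) eqn:E.
    - unfold n1; simpl. rewrite Rabs_R0. pose proof (exp_pos (K - c / 2 * (INR N * INR N))). lra.
    - apply U_bound; auto. }
  assert (Hcv := gauss_cv (c / 2) K ltac:(pose proof c_pos; lra)).
  unfold C_cv; change (Re C0) with 0; change (Im C0) with 0; split; apply squeeze0 with (v := fun N => INR ((2 * N + 1) * (2 * N + 1)) * (2 * exp (K - c / 2 * (INR N * INR N)))); auto;
  intros N; specialize (Hb N); unfold n1 in Hb;
  pose proof (Rabs_pos (Re (Csub (Cmul (theta_partial tau (Cadd x y) N) (theta_partial tau (Csub x y) N)) (DN tau N x y))));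
  pose proof (Rabs_pos (Im (Csub (Cmul (theta_partial tau (Cadd x y) N) (theta_partial tau (Csub x y) N)) (DN tau N x y)))); lra.
Qed.

Lemma DN_cv : forall f, (forall z, C_cv (theta_partial tau z) (f z)) ->
  forall x y, C_cv (fun N => DN tau N x y) (FF f x y).
Proof.
  intros f Hf x y.
  assert (H := C_cv_sub _ _ _ _ (C_cv_mul _ _ _ _ (Hf (Cadd x y)) (Hf (Csub x y))) (diff_cv x y)).
  replace (FF f x y) with (Csub (Cmul (f (Cadd x y)) (f (Csub x y))) C0) by (unfold FF; ring).
  eapply C_cv_ext; [|exact H]. intros n. simpl. ring.
Qed.
End Th.

Lemma TT_theta : forall tau f, 0 < Im tau -> (forall z, C_cv (theta_partial tau z) (f z)) -> TT f.
Proof.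
  intros tau f Htau Hf X1 X2 X3 X4.
  pose proof (DN_cv tau Htau f Hf) as D.
  apply (C_cv_unique (fun N => Cmul (DN tau N X4 X3) (DN tau N X1 X2))).
  - eapply C_cv_ext; [|apply C_cv_add; apply C_cv_mul; apply D].
    intros n. simpl. unfold DN. ring.
  - apply C_cv_mul; apply D.
Qed.



Theorem proposition4p3 :
  forall (eta tau Lam v lam : Cplx) (f : Cplx -> Cplx),
    0 < Im tau -> is_f tau f ->
    forall (i J : nat) (j : Z), (0 < J)%nat ->
    (((j < 0)%Z \/ (j > Z.of_nat J)%Z) ->
       WJ f eta Lam J (Z.of_nat i) j (Z.of_nat i + j)%Z 0%Z v lam = C0) /\
    ((0 <= j <= Z.of_nat J)%Z ->
       (forall m : Z, (1 <= m <= Z.of_nat J)%Z -> f (Cmul (ZtoC (2 * m)) eta) <> C0) ->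
       (forall m : Z, (0 <= m < Z.of_nat J)%Z ->
          f (Csub (Csub (Cmul eta Lam) v) (Cmul (ZtoC (2 * m)) eta)) <> C0) ->
       (forall m : Z, (- (Z.of_nat J + 1) <= m <= Z.of_nat J + 1)%Z ->
          f (Cadd lam (Cmul (ZtoC (2 * m)) eta)) <> C0) ->
       let JZ := Z.of_nat J in
       let iZ := Z.of_nat i in
       let e (n : Z) := Cmul (ZtoC n) eta in
       let P := epoch f eta in
       WJ f eta Lam J iZ j (iZ + j)%Z 0%Z v lam =
       Cmul (Cmul (Cmul
         (Cpow (f (e 2%Z)) (Z.to_nat j))
         (Cdiv (P (e (2 * JZ)%Z) JZ)
               (Cmul (P (e (2 * (JZ - j))%Z) (JZ - j)%Z) (P (e (2 * j)%Z) j))))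
         (Cdiv (P (Cadd lam (e (2 * (iZ + j))%Z)) (JZ - j)%Z)
               (P (Csub (Cmul eta Lam) v) JZ)))
         (Cdiv (Cmul (P (Csub (Cadd (Cadd v lam) (e (2 * (iZ + 2 * j - 1))%Z)) (Cmul eta Lam)) j)
                     (P (Csub (Csub (Cmul eta Lam) (e (2 * (iZ + j))%Z)) v) (JZ - j)%Z))
               (Cmul (P (Cadd lam (e (2 * j)%Z)) (JZ - j)%Z)
                     (P (Cadd lam (e (2 * (2 * j - JZ - 1))%Z)) j)))).
Proof.
  intros eta tau Lam v lam f Htau Hf i J j HJ.
  assert (HTT : TT f) by (destruct Hf as [Hf|Hf]; [exact (TT_theta tau f Htau Hf) | exact (TT_sin f Hf)]).
  split.
  - intros Hout. rewrite WJ_SJ. apply SJ_out; auto.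
  - intros Hj H1 H2 H3. cbv zeta. rewrite WJ_SJ.
    rewrite (main_ind f eta Lam lam HTT J (Z.of_nat i) j v); [reflexivity | lia | lia |].
    split; [exact H1 | split; [exact H2 | exact H3]].
Qed.
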